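(* Identify the vertices of every ordered forest with their preorder traversal labels. Then: (a) For any ordered forest, the labels of a vertex together with all its descendants form a contiguous interval of integers. (b) Let $p\in(0,1]$, $m\in[n]$ and $F\in\mathcal{F}_{\mathrm{ord}}(n)$; let $F\langle m,n\rangle$ be the induced subgraph on the vertices with labels in $[m,n]$, an ordered forest with the inherited orderings, and let $G\in\mathcal{F}_{\mathrm{ord}}(n-m+1)$ be isomorphic to it. For any $G'\in\mathcal{F}_{\mathrm{ord}}(n-m+1)$, the probability that a random Ungar move applied to $F$ produces a forest $F'$ with $F'\langle m,n\rangle\cong G'$ equals the probability that a random Ungar move applied to $G$ produces $G'$. (c) Start from $\hat 1$ (the path on $n$ vertices in which each vertex $i<n$ has unique child $i+1$) and apply a sequence of moves, where at step $t=1,2,\dots$ a set $S_t\subseteq[n]$ of vertices is selected and the selected vertices are operated on in increasing order of label. For each vertex $i$ let $h_i$ be the smallest $t$ with $i\in S_t$. Let $k<l$ be vertices with $h_k>h_l$ and $h_l\ge h_i$ for all $i\in[k+1,l-1]$. Then after $h_l$ steps, $l$ is a child of $k$.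
   Context: An ordered forest is a finite forest of rooted trees with children of each vertex and the trees linearly ordered left to right; $\mathcal{F}_{\mathrm{ord}}(n)$ is the set of such forests on $n$ vertices up to isomorphism. Preorder traversal labels vertices $1,\dots,n$: trees left to right, each vertex before its subtrees, subtrees left to right. Operating on a vertex $v$: if $v$ is a leaf nothing changes; otherwise the rightmost child $v'$ of $v$ (with its subtree) is detached and attached to the parent $w$ of $v$ immediately right of $v$, or, if $v$ is a root, becomes a new tree immediately to the right of the tree of $v$; labels are preserved. A random Ungar move with parameter $p$ on a forest $F$ selects each vertex independently with probability $p$ and operates on the selected vertices in increasing order of label (this is the Ungarian Markov chain on the Tamari lattice realized on $\mathcal{F}_{\mathrm{ord}}(n)$). *)

(* Defs.v *)
From HB Require Import structures.
From mathcomp Require Import all_boot all_order all_algebra.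
Set Implicit Arguments. Unset Strict Implicit. Unset Printing Implicit Defensive.
Import Order.TTheory GRing.Theory Num.Theory.

(* Ordered (plane) trees and forests, represented up to isomorphism as rose
   trees: a tree is the ordered list of its children's subtrees; a forest is
   the ordered list of its trees.  Two ordered forests are isomorphic iff their
   representations are equal. *)
Inductive tree : Type := Node of seq tree.
Definition forest := seq tree.

Fixpoint tenc (t : tree) : GenTree.tree unit :=
  let: Node ts := t in GenTree.Node 0 (map tenc ts).
Fixpoint tdec (g : GenTree.tree unit) : tree :=
  match g with GenTree.Leaf _ => Node [::] | GenTree.Node _ gs => Node (map tdec gs) end.
Fixpoint tencK_ (t : tree) : tdec (tenc t) = t :=
  match t with Node ts => f_equal Node
    ((fix aux (l : seq tree) : map tdec (map tenc l) = l :=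
        match l with [::] => erefl | t' :: l' => f_equal2 cons (tencK_ t') (aux l') end) ts)
  end.
Lemma tencK : cancel tenc tdec. Proof. exact: tencK_. Qed.
HB.instance Definition _ := Countable.copy tree (can_type tencK).

Fixpoint tsize (t : tree) : nat := let: Node ts := t in (sumn (map tsize ts)).+1.
Definition fsize (F : forest) : nat := sumn (map tsize F).

(* Preorder labels (0-based): in a list of trees whose first vertex has label o,
   the i-th tree's root has label o + (sizes of the previous trees).
   [ocat g o ts] concatenates g o_i t_i, where o_i is the preorder label of the
   root of t_i. *)
Fixpoint ocat (A : Type) (g : nat -> tree -> seq A) (o : nat) (ts : seq tree) : seq A :=
  match ts with [::] => [::] | t :: ts' => g o t ++ ocat g (o + tsize t) ts' end.

(* parent/child edges (w, u) : u is a child of w, labels in preorder *)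
Fixpoint tedges (o : nat) (t : tree) {struct t} : seq (nat * nat) :=
  let: Node cs := t in
  [seq (o, c) | c <- ocat (fun o' _ => [:: o']) o.+1 cs] ++ ocat tedges o.+1 cs.
Definition fedges (F : forest) : seq (nat * nat) := ocat tedges 0 F.
Definition is_child (F : forest) (w u : nat) : bool := (w, u) \in fedges F.

Inductive desc (F : forest) (v : nat) : nat -> Prop :=
| desc_refl : desc F v v
| desc_step w u : desc F v w -> is_child F w u -> desc F v u.

(* A tree rooted at v
   is replaced by the two trees: itself without its rightmost child subtree,
   followed by that subtree.  Since this happens inside the children list of
   the parent of v (or the forest, if v is a root), the detached subtree lands
   immediately to the right of v.  Preorder labels are preserved. *)
Definition detach_last (t : tree) : seq tree :=
  let: Node cs := t in
  if rev cs is c :: rcs then [:: Node (rev rcs); c] else [:: t].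

Fixpoint op_tree (v o : nat) (t : tree) {struct t} : seq tree :=
  let: Node cs := t in
  if v == o then detach_last t else [:: Node (ocat (op_tree v) o.+1 cs)].
Definition op (v : nat) (F : forest) : forest := ocat (op_tree v) 0 F.

Definition ungar (n : nat) (S : {set 'I_n}) (F : forest) : forest :=
  foldl (fun F v => op v F) F (sort leq [seq val i | i <- enum S]).

(* probability that a random Ungar move with parameter p (each of the n
   vertices selected independently with probability p) applied to F yields a
   forest satisfying P *)
Definition ungar_prob (R : pzRingType) (n : nat) (p : R) (F : forest)
    (P : pred forest) : R :=
  (\sum_(S : {set 'I_n}) p ^+ #|S| * (1 - p) ^+ (n - #|S|) * (P (ungar S F))%:R)%R.

(* Induced subforest on the vertices with 0-based labels >= k, i.e. 1-based
   labels in [k+1, n]: vertices whose parent is removed become roots, order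
   inherited. *)
Fixpoint restr_tree (k o : nat) (t : tree) {struct t} : seq tree :=
  let: Node cs := t in if k <= o then [:: t] else ocat (restr_tree k) o.+1 cs.
Definition restr (k : nat) (F : forest) : forest := ocat (restr_tree k) 0 F.

Fixpoint chain (k : nat) : tree :=
  match k with 0 => Node [::] | k'.+1 => Node [:: chain k'] end.
Definition hat1 (n : nat) : forest := if n is n'.+1 then [:: chain n'] else [::].

(* h_i for a finite sequence of selection sets S_1, S_2, ... (given as a list):
   the smallest t >= 1 with i \in S_t; equal to (size Ss).+1 (acting as
   "infinity" relative to every step of the list) if i is never selected. *)
Definition hit (n : nat) (Ss : seq {set 'I_n}) (i : 'I_n) : nat :=
  (find (fun S : {set 'I_n} => i \in S) Ss).+1.

Definition run (n : nat) (Ss : seq {set 'I_n}) (F : forest) : forest :=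
  foldl (fun F S => ungar S F) F Ss.

(* Main.v *)
Require Import Defs.
From HB Require Import structures.
From mathcomp Require Import all_boot all_order all_algebra.
From mathcomp Require Import zify.
Import Order.TTheory GRing.Theory Num.Theory.
Import Defs.
Set Implicit Arguments. Unset Strict Implicit. Unset Printing Implicit Defensive.

Section Basics.

Lemma forest_ind2 (P : forest -> Prop) : P [::] ->
  (forall cs F, P cs -> P F -> P (Node cs :: F)) -> forall F, P F.
Proof.
move=> H0 H1 F.
have [n] := ubnP (fsize F); elim: n F => [|n IH] F Hn; first by [].
case: F Hn => [|[cs] F] Hn //.
rewrite /fsize /= -/(fsize cs) -/(fsize F) in Hn.
apply: H1; apply: IH; lia.
Qed.

Lemma tsizeE cs : tsize (Node cs) = (fsize cs).+1.
Proof. by []. Qed.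

Lemma fsize_cons t F : fsize (t :: F) = tsize t + fsize F.
Proof. by []. Qed.

Lemma fsize_cat F1 F2 : fsize (F1 ++ F2) = fsize F1 + fsize F2.
Proof. by rewrite /fsize map_cat sumn_cat. Qed.

Lemma tsize_gt0 t : 0 < tsize t.
Proof. by case: t. Qed.

Lemma ocat_cat A (g : nat -> tree -> seq A) o F1 F2 :
  ocat g o (F1 ++ F2) = ocat g o F1 ++ ocat g (o + fsize F1) F2.
Proof.
elim: F1 o => [|t F1 IH] o /=; first by rewrite addn0.
by rewrite IH -catA fsize_cons addnA.
Qed.

Lemma ocat_ocat A (g : nat -> tree -> seq A) (h : nat -> tree -> forest)
  (f : nat -> nat) o F :
  (forall o t, t \in F -> f o + fsize (h o t) = f (o + tsize t)) ->
  ocat g (f o) (ocat h o F) = ocat (fun o t => ocat g (f o) (h o t)) o F.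
Proof.
elim: F o => [|t F IH] o Hh //=.
rewrite ocat_cat Hh ?mem_head // IH // => o' t' Ht'.
by apply: Hh; rewrite in_cons Ht' orbT.
Qed.

Lemma fsize_ocat (h : nat -> tree -> forest) (f : nat -> nat) o F :
  (forall o t, t \in F -> f o + fsize (h o t) = f (o + tsize t)) ->
  f o + fsize (ocat h o F) = f (o + fsize F).
Proof.
elim: F o => [|t F IH] o Hh /=; first by rewrite /fsize /= !addn0.
rewrite fsize_cat addnA Hh ?mem_head // IH.
  by rewrite fsize_cons addnA.
by move=> o' t' Ht'; apply: Hh; rewrite in_cons Ht' orbT.
Qed.

Lemma ocat_shift A B (g1 : nat -> tree -> seq A) (g2 : nat -> tree -> seq B)
   (m : A -> B) d o F :
  (forall o t, t \in F -> g2 (o + d) t = map m (g1 o t)) ->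
  ocat g2 (o + d) F = map m (ocat g1 o F).
Proof.
elim: F o => [|t F IH] o Hg //=.
rewrite map_cat Hg ?mem_head // -IH; first by rewrite addnAC.
by move=> o' t' Ht'; apply: Hg; rewrite in_cons Ht' orbT.
Qed.

Lemma ocat_ext A (g1 g2 : nat -> tree -> seq A) o F :
  (forall o t, t \in F -> g1 o t = g2 o t) -> ocat g1 o F = ocat g2 o F.
Proof.
elim: F o => [|t F IH] o Hg //=.
rewrite Hg ?mem_head // IH //.
by move=> o' t' Ht'; apply: Hg; rewrite in_cons Ht' orbT.
Qed.

Lemma ocat_id o F : ocat (fun _ t => [:: t]) o F = F.
Proof. by elim: F o => [|t F IH] o //=; rewrite IH. Qed.


Lemma tree_ind' (P : tree -> Prop) :
  (forall cs, (forall c, c \in cs -> P c) -> P (Node cs)) -> forall t, P t.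
Proof.
move=> H t.
have [n] := ubnP (tsize t); elim: n t => [|n IH] [cs] Hn //.
apply: H => c Hc; apply: IH.
suff : tsize c <= fsize cs by rewrite tsizeE in Hn; lia.
elim: cs Hc {Hn} => [|c' cs IHc] //; rewrite in_cons fsize_cons.
case/orP => [/eqP->|/IHc]; lia.
Qed.

Lemma ocat_ext_in A (g1 g2 : nat -> tree -> seq A) o F :
  (forall o' t, t \in F -> o <= o' -> o' + tsize t <= o + fsize F ->
     g1 o' t = g2 o' t) -> ocat g1 o F = ocat g2 o F.
Proof.
elim: F o => [|t F IH] o Hg //=.
rewrite Hg ?mem_head ?fsize_cons //; last lia.
rewrite IH // => o' t' Ht' H1 H2; apply: Hg; rewrite ?in_cons ?Ht' ?orbT //;
  rewrite ?fsize_cons; lia.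
Qed.

Lemma ocat1 A (g : nat -> tree -> seq A) o t : ocat g o [:: t] = g o t.
Proof. by rewrite /= cats0. Qed.

Lemma fsize1 t : fsize [:: t] = tsize t.
Proof. by rewrite /fsize /= addn0. Qed.

Lemma fsize_rcons F t : fsize (rcons F t) = fsize F + tsize t.
Proof. by rewrite -cats1 fsize_cat /fsize /= addn0. Qed.

End Basics.

Section PartB.

Lemma op_tree_shift v o d t : op_tree (v + d) (o + d) t = op_tree v o t.
Proof.
elim/tree_ind': t v o => cs IH v o /=.
rewrite eqn_add2r; case: eqP => // _.
congr [:: Node _]; rewrite -addSn (@ocat_shift _ _ (op_tree v) _ id).
  by rewrite map_id.
by move=> o' t Ht; rewrite map_id IH.
Qed.

Lemma op_tree_out v o t : v < o \/ o + tsize t <= v -> op_tree v o t = [:: t].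
Proof.
elim/tree_ind': t o => cs IH o Hv /=.
have -> : (v == o) = false by apply/eqP; rewrite tsizeE in Hv; lia.
congr [:: Node _]; rewrite -[RHS](ocat_id o.+1); apply: ocat_ext_in.
move=> o' t Ht H1 H2; apply: IH => //; rewrite tsizeE in Hv; lia.
Qed.

Lemma fsize_op_tree v o t : fsize (op_tree v o t) = tsize t.
Proof.
elim/tree_ind': t o => cs IH o /=.
case: eqP => _.
  case/lastP: cs {IH} => [|cs c] //=.
  rewrite rev_rcons /= revK /fsize /= addn0 -/(fsize cs) -/(fsize (rcons cs c)).
  by rewrite fsize_rcons addSn.
rewrite fsize1 !tsizeE; congr _.+1.
have H : o.+1 + fsize (ocat (op_tree v) o.+1 cs) = o.+1 + fsize cs.
  have := @fsize_ocat (op_tree v) id o.+1 cs; apply => o' t Ht.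
  by rewrite /= IH.
exact: addnI H.
Qed.

Lemma fsize_restr_tree k o t :
  (o - k) + fsize (restr_tree k o t) = o + tsize t - k.
Proof.
elim/tree_ind': t o => cs IH o /=.
case: leqP => Hko.
  rewrite /fsize /= addn0; lia.
have H : (o.+1 - k) + fsize (ocat (restr_tree k) o.+1 cs) = (o.+1 + fsize cs) - k.
  have := @fsize_ocat (restr_tree k) (subn^~ k) o.+1 cs; apply => o' t Ht.
  by rewrite /= IH.
rewrite -/(fsize cs); lia.
Qed.

Lemma restr_ge k o F : k <= o -> ocat (restr_tree k) o F = F.
Proof.
move=> Hk; rewrite -[RHS](ocat_id o); apply: ocat_ext_in.
move=> o' [cs] _ H1 _ /=; case: leqP => //; lia.
Qed.

Lemma restr_op_tree k v o t :
  ocat (restr_tree k) o (op_tree v o t) =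
  if v < k then restr_tree k o t
  else ocat (op_tree (v - k)) (o - k) (restr_tree k o t).
Proof.
elim/tree_ind': t o => cs IH o.
case: (leqP k o) => Hko.
  rewrite restr_ge; last first.
    by [].
  have -> : restr_tree k o (Node cs) = [:: Node cs] by rewrite /= Hko.
  case: ltnP => Hvk.
    by apply: op_tree_out; left; lia.
  rewrite ocat1.
  by rewrite -[in LHS](subnK Hvk) -[in LHS](subnK Hko) op_tree_shift.
have Hr : restr_tree k o (Node cs) = ocat (restr_tree k) o.+1 cs.
  by rewrite /= leqNgt Hko.
rewrite Hr /=.
case: eqP => [Hvo|Hvo].
  subst v; rewrite Hko.
  case/lastP: cs {IH Hr} => [|cs c] /=.
    by rewrite leqNgt Hko.
  rewrite rev_rcons /= revK leqNgt Hko /= cats0 -cats1 ocat_cat /=.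
  by rewrite cats0 addnS.
rewrite ocat1 /= leqNgt Hko /=.
have := @ocat_ocat _ (restr_tree k) (op_tree v) id o.+1 cs; rewrite /= => ->;
  last by move=> o' t _; rewrite fsize_op_tree.
case: ltnP => Hvk.
  by apply: ocat_ext => o' t Ht; rewrite IH // Hvk.
have -> : o - k = o.+1 - k by lia.
have := @ocat_ocat _ (op_tree (v - k)) (restr_tree k) (subn^~ k) o.+1 cs.
rewrite /= => ->; last by move=> o' t _; rewrite fsize_restr_tree.
apply: ocat_ext => o' t Ht; rewrite IH //.
by rewrite ltnNge Hvk.
Qed.

Lemma restr_op k v F :
  restr k (op v F) = if v < k then restr k F else op (v - k) (restr k F).
Proof.
rewrite /restr /op.
have := @ocat_ocat _ (restr_tree k) (op_tree v) id 0 F; rewrite /= => ->;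
  last by move=> o t _; rewrite fsize_op_tree.
case: ltnP => Hvk.
  by apply: ocat_ext => o t _; rewrite restr_op_tree Hvk.
have := @ocat_ocat _ (op_tree (v - k)) (restr_tree k) (subn^~ k) 0 F.
rewrite sub0n => ->; last by move=> o t _; rewrite fsize_restr_tree.
by apply: ocat_ext => o t _; rewrite restr_op_tree ltnNge Hvk.
Qed.

Lemma restr_foldl k F L :
  restr k (foldl (fun F v => op v F) F L) =
  foldl (fun F v => op v F) (restr k F) [seq x - k | x <- L & k <= x].
Proof.
elim: L F => [|v L IH] F //=.
rewrite IH restr_op; case: ltnP => H /=; by rewrite ?H // leqNgt H.
Qed.

End PartB.

Section PartBprob.

Definition lst n (S : {set 'I_n}) : seq nat := sort leq [seq val i | i <- enum S].

Lemma ungarE n (S : {set 'I_n}) F : ungar S F = foldl (fun F v => op v F) F (lst S).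
Proof. by []. Qed.

Lemma mem_lstP n (S : {set 'I_n}) x : reflect (exists2 i : 'I_n, i \in S & x = val i) (x \in lst S).
Proof.
rewrite /lst mem_sort; apply: (iffP idP).
  by case/mapP => i; rewrite mem_enum => Hi ->; exists i.
by case=> i Hi ->; apply/mapP; exists i; rewrite ?mem_enum.
Qed.

Lemma lst_sorted n (S : {set 'I_n}) : sorted leq (lst S).
Proof. exact: (sort_sorted leq_total). Qed.

Lemma lst_uniq n (S : {set 'I_n}) : uniq (lst S).
Proof. by rewrite /lst sort_uniq map_inj_uniq ?enum_uniq //; exact: val_inj. Qed.

Definition projS k j (S : {set 'I_(k + j)}) : {set 'I_j} := [set i | rshift k i \in S].

Lemma lst_projS k j (S : {set 'I_(k + j)}) :
  [seq x - k | x <- lst S & k <= x] = lst (projS S).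
Proof.
apply: (sorted_eq leq_trans anti_leq).
- rewrite sorted_map; apply: (@sub_sorted _ leq).
    by move=> x y /= Hxy; rewrite leq_sub2r.
  by apply: sorted_filter; [exact: leq_trans | exact: lst_sorted].
- exact: lst_sorted.
apply: uniq_perm; last 1 first.
- move=> y; apply/idP/idP.
  + case/mapP => x; rewrite mem_filter => /andP [Hkx Hx] ->.
    have := Hx; move/mem_lstP => -[i Hi Hxi].
    have Hij : x - k < j by have := ltn_ord i; rewrite -Hxi; lia.
    apply/mem_lstP; exists (Ordinal Hij) => //.
    rewrite inE; suff -> : rshift k (Ordinal Hij) = i by [].
    by apply: val_inj => /=; rewrite subnKC // -Hxi.
  + move/mem_lstP => -[i]; rewrite inE => Hi ->.
    apply/mapP; exists (val (rshift k i)); last by rewrite /= addKn.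
    rewrite mem_filter /= leq_addr /=; apply/mem_lstP; by exists (rshift k i).
- rewrite map_inj_in_uniq; first by apply: filter_uniq; exact: lst_uniq.
  move=> x y; rewrite !mem_filter => /andP [Hx _] /andP [Hy _]; lia.
- exact: lst_uniq.
Qed.

Lemma restr_ungar k j (S : {set 'I_(k + j)}) F :
  restr k (ungar S F) = ungar (projS S) (restr k F).
Proof. by rewrite !ungarE restr_foldl lst_projS. Qed.

Variable R : realFieldType.
Variable p : R.

Local Open Scope ring_scope.

Definition W (b : bool) : R := if b then p else 1 - p.

Lemma weightE n (S : {set 'I_n}) :
  p ^+ #|S| * (1 - p) ^+ (n - #|S|) = \prod_(i : 'I_n) W (i \in S).
Proof.
symmetry; rewrite (bigID (mem S)) /=.
have E1 : \prod_(i : 'I_n | i \in S) W (i \in S) = p ^+ #|S|.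
  by rewrite -prodr_const; apply: eq_bigr => i ->.
have E2 : \prod_(i : 'I_n | i \notin S) W (i \in S) = (1 - p) ^+ #|[predC S]|.
  by rewrite -prodr_const; apply: eq_bigr => i /negbTE ->.
rewrite E1 E2; congr (_ * _ ^+ _).
have H := cardC S. rewrite card_ord in H. transitivity (#|S| + #|[predC S]| - #|S|)%N; first by rewrite addKn. by rewrite H.
Qed.

Lemma sumW1 k : \sum_(A : {set 'I_k}) \prod_(i : 'I_k) W (i \in A) = 1.
Proof.
transitivity (\prod_(i : 'I_k) \sum_(b : bool) W b); last first.
  rewrite big1 // => i _; rewrite big_bool /= /W; by rewrite addrC subrK.
rewrite (bigA_distr_bigA (fun (_ : 'I_k) b => W b)).
rewrite [RHS](reindex (fun A : {set 'I_k} => [ffun i => i \in A])) /=.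
  by apply: eq_bigr => A _; apply: eq_bigr => i _; rewrite ffunE.
exists (fun f : {ffun 'I_k -> bool} => [set i | f i]) => [A _|f _].
  by apply/setP => i; rewrite inE ffunE.
by apply/ffunP => i; rewrite ffunE inE.
Qed.

Definition joinS k j (A : {set 'I_k}) (B : {set 'I_j}) : {set 'I_(k + j)} :=
  [set x | match split x with inl a => a \in A | inr b => b \in B end].

Lemma sum_split k j (f : {set 'I_j} -> R) :
  \sum_(S : {set 'I_(k + j)}) p ^+ #|S| * (1 - p) ^+ (k + j - #|S|) * f (projS S)
  = \sum_(T : {set 'I_j}) p ^+ #|T| * (1 - p) ^+ (j - #|T|) * f T.
Proof.
rewrite (reindex (fun AB : {set 'I_k} * {set 'I_j} => joinS AB.1 AB.2)) /=; last first.
  exists (fun S : {set 'I_(k + j)} => ([set a | lshift j a \in S], projS S)).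
    move=> [A B] _ /=; congr (_, _); apply/setP => x; rewrite !inE.
      by rewrite -[lshift j x]/(unsplit (inl x)) unsplitK.
    by rewrite -[rshift k x]/(unsplit (inr x)) unsplitK.
  move=> S _; apply/setP => x; rewrite !inE.
  by case: splitP => y Hy; rewrite inE; congr (_ \in S); apply: val_inj; rewrite /= Hy.
rewrite -(pair_bigA _ (fun A B => p ^+ #|joinS A B| * (1 - p) ^+ (k + j - #|joinS A B|) * f (projS (joinS A B)))) /=.
under eq_bigr => A _.
  under eq_bigr => B _.
    rewrite weightE big_split_ord /=.
    have -> : projS (joinS A B) = B.
      by apply/setP => x; rewrite !inE -[rshift k x]/(unsplit (inr x)) unsplitK.
    under eq_bigr => i _ do rewrite inE -[lshift j i]/(unsplit (inl i)) unsplitK.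
    under [X in _ * X * _]eq_bigr => i _ do rewrite inE -[rshift k i]/(unsplit (inr i)) unsplitK.
    rewrite -mulrA.
  over.
  rewrite -big_distrr /=.
over.
rewrite /= -big_distrl /= sumW1 mul1r.
by apply: eq_bigr => T _; rewrite weightE.
Qed.

End PartBprob.

Lemma partB : forall (R : realFieldType) (p : R) (n m : nat) (F G G' : forest),
     (0 < p <= 1)%R -> 1 <= m <= n -> fsize F = n ->
     G = restr m.-1 F -> fsize G' = n - m + 1 ->
     ungar_prob n p F (fun F' => restr m.-1 F' == G')
     = ungar_prob (n - m + 1) p G (fun G2 => G2 == G').
Proof.
move=> R p n m F G G' _ Hm _ -> _.
have e : n = m.-1 + (n - m + 1) by lia.
rewrite /ungar_prob.
move: (n - m + 1) (m.-1) e => j k e; subst n.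
under eq_bigr => S _ do rewrite /= restr_ungar.
exact: (@sum_split R p k j (fun T => ((ungar T (restr k F) == G')%:R)%R)).
Qed.

Section Sizes.

Fixpoint tszs (t : tree) : seq nat :=
  let: Node cs := t in tsize t :: ocat (fun _ c => tszs c) 0 cs.
Definition fszs (F : forest) : seq nat := ocat (fun _ c => tszs c) 0 F.
Definition sz F x := nth 0 (fszs F) x.
Definition roots (F : forest) : seq nat := ocat (fun o _ => [:: o]) 0 F.

Lemma ocat_const A (g : tree -> seq A) o1 o2 F :
  ocat (fun _ t => g t) o1 F = ocat (fun _ t => g t) o2 F.
Proof. by elim: F o1 o2 => [|t F IH] o1 o2 //=; rewrite (IH _ (o2 + tsize t)). Qed.

Lemma fszs_nil : fszs [::] = [::]. Proof. by []. Qed.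

Lemma fszs_cons t F : fszs (t :: F) = tszs t ++ fszs F.
Proof. by rewrite /fszs /= (ocat_const _ _ 0). Qed.

Lemma fszs_cat F1 F2 : fszs (F1 ++ F2) = fszs F1 ++ fszs F2.
Proof. by elim: F1 => [|t F1 IH] //=; rewrite !fszs_cons IH catA. Qed.

Lemma tszsE cs : tszs (Node cs) = (fsize cs).+1 :: fszs cs.
Proof. by []. Qed.

Lemma size_tszs t : size (tszs t) = tsize t.
Proof.
elim/tree_ind': t => cs IH; rewrite tszsE tsizeE /=; congr _.+1.
elim: cs IH => [|c cs IHc] IH //=; rewrite fszs_cons size_cat fsize_cons IH ?mem_head //.
by rewrite IHc // => c' Hc'; apply: IH; rewrite in_cons Hc' orbT.
Qed.

Lemma size_fszs F : size (fszs F) = fsize F.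
Proof. by elim: F => [|t F IH] //=; rewrite fszs_cons size_cat size_tszs IH. Qed.

Lemma sz_out F x : fsize F <= x -> sz F x = 0.
Proof. by move=> H; rewrite /sz nth_default // size_fszs. Qed.

Lemma sz0 cs F : sz (Node cs :: F) 0 = (fsize cs).+1.
Proof. by []. Qed.

Lemma szL cs F x : 0 < x <= fsize cs -> sz (Node cs :: F) x = sz cs x.-1.
Proof.
move=> /andP [H0 H1]; rewrite /sz fszs_cons tszsE.
case: x H0 H1 => // x _ H1 /=; rewrite nth_cat size_fszs; case: ltnP => //; lia.
Qed.

Lemma szR cs F x : (fsize cs).+1 <= x -> sz (Node cs :: F) x = sz F (x - (fsize cs).+1).
Proof.
move=> H1; rewrite /sz fszs_cons tszsE.
case: x H1 => // x H1 /=; rewrite nth_cat size_fszs; case: ltnP => //; lia.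
Qed.

Lemma roots_cons t F : roots (t :: F) = 0 :: map (addn (tsize t)) (roots F).
Proof.
rewrite /roots /=; congr (_ :: _).
have := @ocat_shift _ _ (fun o (_ : tree) => [:: o]) (fun o _ => [:: o]) (addn (tsize t)) (tsize t) 0 F.
rewrite add0n => -> // o t' _ /=; by rewrite addnC.
Qed.

Definition sh d (e : nat * nat) := (e.1 + d, e.2 + d).

Lemma tedges_shift d o t : tedges (o + d) t = map (sh d) (tedges o t).
Proof.
elim/tree_ind': t o => cs IH o /=.
rewrite map_cat -addSn; congr (_ ++ _).
  rewrite (@ocat_shift _ _ (fun o (_ : tree) => [:: o]) (fun o _ => [:: o]) (addn^~ d)); last first.
    by [].
  by rewrite -!map_comp.
by apply: ocat_shift => o' t Ht; rewrite IH.
Qed.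

Lemma fedges_cons cs F :
  fedges (Node cs :: F) =
  [seq (0, c) | c <- map (addn 1) (roots cs)] ++ map (sh 1) (fedges cs)
  ++ map (sh (fsize cs).+1) (fedges F).
Proof.
rewrite /fedges /= -catA; congr (_ ++ _ ++ _).
- congr map; rewrite /roots.
  have := @ocat_shift _ _ (fun o (_ : tree) => [:: o]) (fun o _ => [:: o]) (addn 1) 1 0 cs.
  rewrite add0n => -> // o t' _ /=; by rewrite addnC.
- by have := @ocat_shift _ _ tedges tedges (sh 1) 1 0 cs; rewrite add0n => ->
    // o t _; rewrite tedges_shift.
- have := @ocat_shift _ _ tedges tedges (sh (fsize cs).+1) (fsize cs).+1 0 F.
  by rewrite add0n => -> // o t _; rewrite tedges_shift.
Qed.

Lemma mem_sh d L w u : ((w, u) \in map (sh d) L) = [&& d <= w, d <= u & (w - d, u - d) \in L].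
Proof.
apply/idP/idP.
  case/mapP => [[w' u']] H [-> ->] /=; rewrite !leq_addl !addnK; exact: H.
case/and3P => H1 H2 H3; apply/mapP; exists (w - d, u - d) => //.
by rewrite /sh /= !subnK.
Qed.

Definition lamP F := forall v, v < fsize F -> [/\ 0 < sz F v, v + sz F v <= fsize F &
  forall w, v < w < v + sz F v -> w + sz F w <= v + sz F v].

Lemma lam F : lamP F.
Proof.
elim/forest_ind2: F => [|cs F IHc IHF] v //.
rewrite fsize_cons tsizeE => Hv.
case: (posnP v) => [->|Hv0].
  rewrite sz0; split => //; first lia.
  move=> w Hw; rewrite szL; last lia.
  have [] := IHc w.-1; first lia.
  move=> _ H _; lia.
case: (leqP v (fsize cs)) => Hvc.
  rewrite szL; last lia.
  have [H1 H2 H3] := IHc v.-1 ltac:(lia).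
  split; [done|lia|] => w Hw.
  rewrite szL; last lia.
  have := H3 w.-1 ltac:(lia); lia.
rewrite szR //.
have [H1 H2 H3] := IHF (v - (fsize cs).+1) ltac:(lia).
split; [done|lia|] => w Hw.
rewrite szR; last lia.
have := H3 (w - (fsize cs).+1) ltac:(lia); lia.
Qed.

End Sizes.

Section Chars.

Lemma roots_char F u :
  (u \in roots F) <-> (u < fsize F /\ forall w, w < u -> w + sz F w <= u).
Proof.
elim/forest_ind2: F u => [|cs F IHc IHF] u.
  by rewrite /roots /=; split => // -[].
rewrite roots_cons in_cons tsizeE fsize_cons tsizeE.
have Lc := @lam cs.
split.
  case/orP => [/eqP ->|]; first by split => //; lia.
  case/mapP => r Hr ->.
  have [H1 H2] := (IHF r).1 Hr.
  split; first lia.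
  move=> w Hw.
  case: (posnP w) => [->|Hw0]; first by rewrite sz0; lia.
  case: (leqP w (fsize cs)) => Hwc.
    rewrite szL; last lia.
    have [_ H _] := Lc w.-1 ltac:(lia); lia.
  rewrite szR //; have := H2 (w - (fsize cs).+1) ltac:(lia); lia.
case=> H1 H2.
case: (posnP u) => [->|Hu0] //.
case: (leqP u (fsize cs)) => Huc.
  have := H2 0 Hu0; rewrite sz0; lia.
apply/orP; right; apply/mapP; exists (u - (fsize cs).+1); last lia.
apply/IHF; split; first lia.
move=> w Hw; have := H2 (w + (fsize cs).+1) ltac:(lia).
rewrite szR; last lia.
rewrite addnK; lia.
Qed.

Definition CF F w u :=
  w < u < w + sz F w /\ forall w', w < w' < u -> w' + sz F w' <= u.

Lemma edges_char F w u : ((w, u) \in fedges F) <-> CF F w u.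
Proof.
elim/forest_ind2: F w u => [|cs F IHc IHF] w u.
  by rewrite /fedges /=; split => // -[]; rewrite /sz nth_nil; lia.
have Lc := @lam cs.
rewrite fedges_cons !mem_cat !mem_sh /CF.
have E0 : ((w, u) \in [seq (0, c) | c <- map (addn 1) (roots cs)]) =
    (w == 0) && (0 < u) && (u.-1 \in roots cs).
  apply/idP/idP.
    case/mapP => c /mapP [r Hr ->] [-> ->] /=; exact: Hr.
  case/andP => /andP [/eqP -> Hu] Hr; apply/mapP; exists u => //.
  by apply/mapP; exists u.-1 => //; rewrite add1n prednK.
rewrite E0.
case: (posnP w) => [->|Hw0].
  rewrite ltn0 /=.
  rewrite ?andbF ?orbF sz0.
  split.
    case/andP => Hu /roots_char [H1 H2]; split; first lia.
    move=> w' Hw'; rewrite szL; last lia.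
    have := H2 w'.-1 ltac:(lia); lia.
  case=> H1 H2; rewrite (_ : 0 < u) /=; last lia.
  apply/roots_char; split; first lia.
  move=> w' Hw'; have := H2 w'.+1 ltac:(lia); rewrite szL /=; lia.
rewrite /=.
case: (leqP w (fsize cs)) => Hwc.
  rewrite /= ?orbF.
  rewrite szL; last lia.
  have [Ls1 Ls2 Ls3] := Lc w.-1 ltac:(lia).
  split.
    case/andP => Hu /IHc [H1 H2].
    rewrite (_ : w - 1 = w.-1) in H1 H2; last lia.
    split; first lia.
    move=> w' Hw'; rewrite szL; last lia.
    have := H2 w'.-1 ltac:(lia); lia.
  case=> H1 H2; rewrite (_ : 0 < u) /=; last lia.
  apply/IHc; rewrite (_ : w - 1 = w.-1); last lia.
  split; first lia.
  move=> w' Hw'; have := H2 w'.+1 ltac:(lia); rewrite szL /=; lia.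
rewrite (_ : (0 < u) && ((w - 1, u - 1) \in fedges cs) = false); last first.
  apply/negP => /andP [_ /IHc [H1 _]].
  have := @sz_out cs (w - 1) ltac:(lia); lia.
rewrite /= szR //.
split.
  case/andP => Hu /IHF [H1 H2]; split; first lia.
  move=> w' Hw'; rewrite szR; last lia.
  have := H2 (w' - (fsize cs).+1) ltac:(lia); lia.
case=> H1 H2; rewrite (_ : (fsize cs).+1 <= u) /=; last lia.
apply/IHF; split; first lia.
move=> w' Hw'; have := H2 (w' + (fsize cs).+1) ltac:(lia).
rewrite szR; last lia.
rewrite addnK; lia.
Qed.

End Chars.

Lemma desc_char F v u : v < fsize F -> desc F v u <-> v <= u < v + sz F v.
Proof.
move=> Hv; have [L1 L2 L3] := lam Hv.
split.
  elim => [|w u' _ IH /edges_char [H1 H2]]; first lia.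
  case: (eqVneq w v) => [Ewv|Hwv]; first by subst w; lia.
  have := L3 w ltac:(lia); lia.
elim/ltn_ind: u => u IH Hu.
case: (eqVneq u v) => [->|Huv]; first exact: desc_refl.
pose P := fun w => (v <= w < u) && (u < w + sz F w).
have exP : exists w, P w by exists v; rewrite /P; apply/andP; split; lia.
have ubP : forall w, P w -> w <= u by move=> w /andP [H _]; lia.
case: (ex_maxnP exP ubP) => w /andP [Hw1 Hw2] Hmax.
apply: (@desc_step _ _ w).
  apply: IH; lia.
apply/edges_char; split; first lia.
move=> w' Hw'; case: (leqP (w' + sz F w') u) => // Hc.
have := Hmax w' ltac:(rewrite /P; apply/andP; split; lia); lia.
Qed.

Lemma partA : forall (F : forest) (v : nat), v < fsize F ->
     exists k : nat, forall u : nat, desc F v u <-> v <= u < v + k.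
Proof. by move=> F v Hv; exists (sz F v) => u; apply: desc_char. Qed.

Section Ops.

Lemma fsize_op v F : fsize (op v F) = fsize F.
Proof.
rewrite /op; have := @fsize_ocat (op_tree v) id 0 F; rewrite /= !add0n; apply.
by move=> o t _; rewrite fsize_op_tree.
Qed.

Lemma ocat_op_out v o F : v < o -> ocat (op_tree v) o F = F.
Proof.
move=> H; rewrite -[RHS](ocat_id o); apply: ocat_ext_in => o' t _ H1 _.
apply: op_tree_out; left; lia.
Qed.

Lemma ocat_op_shift v d F : ocat (op_tree (v + d)) (0 + d) F = op v F.
Proof.
have := @ocat_shift _ _ (op_tree v) (op_tree (v + d)) id d 0 F.
rewrite map_id => -> // o t _; by rewrite op_tree_shift map_id.
Qed.

Lemma op_cons_lt v cs F : 0 < v <= fsize cs ->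
  op v (Node cs :: F) = Node (op v.-1 cs) :: F.
Proof.
move=> Hv; rewrite /op /= (_ : (v == 0) = false); last lia.
rewrite (@ocat_op_out v (0 + (fsize cs).+1)); last lia.
have := ocat_op_shift v.-1 1 cs; rewrite add0n addn1 prednK; last lia.
by move=> ->.
Qed.

Lemma op_cons_ge v cs F : (fsize cs).+1 <= v ->
  op v (Node cs :: F) = Node cs :: op (v - (fsize cs).+1) F.
Proof.
move=> Hv; rewrite /op /= -/(op_tree v 0 (Node cs)).
rewrite op_tree_out /=; last by right.
congr (_ :: _).
have := ocat_op_shift (v - (fsize cs).+1) (fsize cs).+1 F.
by rewrite subnK.
Qed.

Lemma op_cons_0 cs F : op 0 (Node cs :: F) = detach_last (Node cs) ++ F.
Proof. by rewrite /op /= ocat_op_out. Qed.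

Definition opP F := forall v,
  [/\ forall u, u != v -> sz (op v F) u = sz F u,
      sz (op v F) v <= sz F v &
      forall l, v < l < v + sz F v -> v + sz F v <= l + sz F l ->
        v + sz (op v F) v <= l].

Lemma op_sz F : opP F.
Proof.
elim/forest_ind2: F => [|cs F IHc IHF] v.
  rewrite /op /=; split => // l; rewrite /sz nth_nil; lia.
case: (posnP v) => [->|Hv0].
  rewrite op_cons_0 /=.
  case/lastP: cs {IHc} => [|cs c] /=.
    split => // l; rewrite sz0 /fsize /=; lia.
  rewrite rev_rcons /= revK.
  have Es : forall u, u != 0 -> sz [:: Node cs, c & F] u = sz (Node (rcons cs c) :: F) u.
    move=> u Hu; rewrite /sz !fszs_cons !tszsE -cats1 fszs_cat fszs_cons.
    case: u Hu => // u _ /=; by rewrite fszs_nil cats0 catA.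
  split => //.
    by rewrite !sz0 fsize_rcons; lia.
  move=> l Hl; rewrite !sz0 fsize_rcons => Hl2.
  rewrite -Es in Hl2; last lia.
  case: (leqP l (fsize cs)) => Hlc; last lia.
  rewrite szL in Hl2; last lia.
  have [_ H _] := lam (F := cs) (v := l.-1) ltac:(lia).
  have := tsize_gt0 c; lia.
case: (leqP v (fsize cs)) => Hvc.
  rewrite op_cons_lt; last lia.
  have [H1 H2 H3] := IHc v.-1.
  have Ev : sz (Node cs :: F) v = sz cs v.-1 by rewrite szL //; lia.
  have Ev' : sz (Node (op v.-1 cs) :: F) v = sz (op v.-1 cs) v.-1.
    by rewrite szL // fsize_op; lia.
  split.
  - move=> u Hu; case: (posnP u) => [->|Hu0]; first by rewrite !sz0 fsize_op.
    case: (leqP u (fsize cs)) => Huc.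
      rewrite szL; last by rewrite fsize_op; lia.
      rewrite szL; last lia.
      by apply: H1; lia.
    by rewrite !szR ?fsize_op.
  - by rewrite Ev Ev'.
  - rewrite Ev Ev' => l Hl.
    have [_ Lb _] := lam (F := cs) (v := v.-1) ltac:(lia).
    rewrite szL; last lia.
    move=> Hl2; have := H3 l.-1 ltac:(lia) ltac:(lia); lia.
rewrite op_cons_ge //.
have [H1 H2 H3] := IHF (v - (fsize cs).+1).
split.
- move=> u Hu; case: (leqP (fsize cs).+1 u) => Huc.
    by rewrite !szR //; apply: H1; lia.
  case: (posnP u) => [->|Hu0]; first by rewrite !sz0.
  by rewrite !szL //; lia.
- by rewrite !szR.
- move=> l; rewrite !(@szR cs _ v) // => Hl; rewrite szR; last lia.
  move=> Hl2; have := H3 (l - (fsize cs).+1) ltac:(lia) ltac:(lia); lia.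
Qed.

End Ops.

Section PartC.

Lemma tsize_chain k : tsize (chain k) = k.+1.
Proof. by elim: k => //= k IH; rewrite /fsize /= addn0 -/(fsize [::]) IH. Qed.

Lemma nth_chain k i : nth 0 (tszs (chain k)) i = k.+1 - i.
Proof.
elim: k i => [|k IH] [|i] //=; first by rewrite nth_nil.
  by rewrite tsize_chain addn0.
rewrite cats0 IH; lia.
Qed.

Lemma fsize_hat1 n : fsize (hat1 n) = n.
Proof. by case: n => //= n; rewrite fsize1 tsize_chain. Qed.

Lemma sz_hat1 n u : sz (hat1 n) u = n - u.
Proof.
case: n => [|n]; first by rewrite /sz /= nth_nil.
by rewrite /sz /hat1 fszs_cons fszs_nil cats0 nth_chain.
Qed.

Definition opf (F : forest) v := op v F.

Lemma split_mem (T : eqType) (x : T) s : x \in s -> exists P1 P2, s = P1 ++ x :: P2.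
Proof. by case/splitPr => P1 P2; exists P1, P2. Qed.

Lemma c_core n k l (L : seq nat) : k < l < n -> k \notin L -> l \in L ->
  (forall P Q, L = P ++ l :: Q -> forall i, k < i < l -> i \in P) ->
  is_child (foldl opf (hat1 n) L) k l.
Proof.
move=> Hkl HkL HlL Hpre.
have Inv : forall j, j <= size L ->
   let P := take j L in let F := foldl opf (hat1 n) P in
   [/\ fsize F = n, forall u, u \notin P -> sz F u = n - u &
       forall i, k < i < l -> i \in P -> i + sz F i <= l].
  elim => [|j IH] Hj /=.
    by rewrite take0 /= fsize_hat1; split => // u _; rewrite sz_hat1.
  have [H1 H2 H3] := IH (ltnW Hj).
  rewrite (take_nth 0 Hj) foldl_rcons.
  set x := nth 0 L j.
  set P := take j L.
  set F := foldl opf (hat1 n) P.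
  have [O1 O2 O3] := op_sz F x.
  have EF : foldl (fun F0 : forest => op^~ F0) (hat1 n) (take j L) = F by [].
  rewrite EF in H1 H2 H3.
  split.
  - by rewrite /opf fsize_op.
  - move=> u; rewrite -cats1 mem_cat mem_seq1 negb_or => /andP [Hu1 Hu2].
    by rewrite /opf O1 // H2.
  - move=> i Hi; rewrite -cats1 mem_cat mem_seq1 => /orP [HiP|/eqP Hix].
      case: (eqVneq i x) => [Eix|Hix]; last by rewrite /opf O1 //; apply: H3.
      have := H3 i Hi HiP; rewrite Eix /opf; lia.
    case: (boolP (i \in P)) => HiP.
      have := H3 i Hi HiP; rewrite Hix /opf; lia.
    have HlP : l \notin P.
      apply/negP => /split_mem [P1 [P2 HP]].
      have HL : L = P1 ++ l :: (P2 ++ drop j L).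
        by rewrite -[LHS](cat_take_drop j) -/P HP -catA.
      have := Hpre _ _ HL i Hi.
      move: HiP; rewrite -/P HP mem_cat => /negP Hn Hin; apply: Hn; by rewrite Hin.
    have Si := H2 i HiP.
    have Sl := H2 l HlP.
    have Hfs := H1.
    rewrite /opf -Hix; rewrite -Hix in O3.
    apply: O3; rewrite ?Si ?Sl; lia.
have [H1 H2 H3] := Inv (size L) (leqnn _).
rewrite take_size in H1 H2 H3.
apply/edges_char; split.
  by rewrite H2 //; lia.
move=> w Hw; apply: H3 => //.
case/splitPr: HlL Hpre => P Q Hpre.
have := Hpre P Q erefl w Hw.
by rewrite mem_cat => ->.
Qed.

End PartC.

Section PartCconn.

Lemma run_flat n (Ss : seq {set 'I_n}) F :
  run Ss F = foldl opf F (flatten [seq lst X | X <- Ss]).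
Proof. by elim: Ss F => [|X Ss IH] F //=; rewrite foldl_cat IH. Qed.

Lemma notin_take (T : Type) (a : pred T) s h : h <= find a s -> ~~ has a (take h s).
Proof.
move=> Hh; apply/negP => Hs.
have := find_cat a (take h s) (drop h s); rewrite cat_take_drop Hs => E.
have H1 : find a (take h s) < size (take h s) by rewrite -has_find.
have H2 : size (take h s) <= h.
  by rewrite size_take; case: ifP => // /negbT; rewrite -leqNgt.
lia.
Qed.

Lemma mem_val_lst n (S : {set 'I_n}) (i : 'I_n) : (val i \in lst S) = (i \in S).
Proof.
apply/mem_lstP/idP => [[j Hj /val_inj ->] //|Hi]; by exists i.
Qed.

Lemma mem_flat n (Ss : seq {set 'I_n}) (i : 'I_n) :
  (val i \in flatten [seq lst X | X <- Ss]) = has (fun X : {set 'I_n} => i \in X) Ss.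
Proof.
apply/flatten_mapP/hasP => [[X HX]|[X HX Hi]].
  by rewrite mem_val_lst => Hi; exists X.
by exists X; rewrite ?mem_val_lst.
Qed.

Lemma split_after (L1 L2 P Q : seq nat) l :
  l \notin L1 -> P ++ l :: Q = L1 ++ L2 ->
  exists P2, P = L1 ++ P2 /\ L2 = P2 ++ l :: Q.
Proof.
move=> Hl E.
have Hs : size L1 <= size P.
  case: leqP => // Hlt; move: Hl.
  have : nth 0 (P ++ l :: Q) (size P) = l by rewrite nth_cat ltnn subnn.
  rewrite E nth_cat Hlt => <-; by rewrite mem_nth.
have E1 : take (size L1) P = L1.
  by have := congr1 (take (size L1)) E; rewrite takel_cat // take_size_cat.
have E2 : drop (size L1) (P ++ l :: Q) = drop (size L1) P ++ l :: Q.
  rewrite drop_cat; case: ltnP => // H.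
  have -> : size L1 = size P by lia.
  by rewrite subnn drop0 drop_size.
exists (drop (size L1) P); split; first by rewrite -{1}(cat_take_drop (size L1) P) E1.
by rewrite -E2 E drop_size_cat.
Qed.

Lemma hit_nth n (Ss : seq {set 'I_n}) (i : 'I_n) :
  hit Ss i <= size Ss -> i \in nth set0 Ss (hit Ss i).-1.
Proof.
rewrite /hit /= => H.
have Hh : has (fun X : {set 'I_n} => i \in X) Ss by rewrite has_find.
exact: (nth_find set0 Hh).
Qed.

Lemma mem_hit n (Ss : seq {set 'I_n}) (i : 'I_n) h :
  hit Ss i <= h -> h <= size Ss -> val i \in flatten [seq lst X | X <- take h Ss].
Proof.
move=> H1 H2; rewrite mem_flat; apply/hasP.
exists (nth set0 Ss (hit Ss i).-1); last by apply: hit_nth; lia.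
rewrite -(@nth_take h); last by rewrite /hit /= in H1 *; lia.
apply: mem_nth; rewrite size_take; case: ifP => _; rewrite /hit /= in H1 *; lia.
Qed.

Lemma partC : forall (n : nat) (Ss : seq {set 'I_n}) (k l : 'I_n),
     k < l -> hit Ss l <= size Ss -> hit Ss l < hit Ss k ->
     (forall i : 'I_n, k < i < l -> hit Ss i <= hit Ss l) ->
     is_child (run (take (hit Ss l) Ss) (hat1 n)) k l.
Proof.
move=> n Ss k l Hkl Hls Hlk Hi.
rewrite run_flat.
set j0 := find (fun X : {set 'I_n} => l \in X) Ss.
have Hj0 : j0 < size Ss by move: Hls; rewrite /hit.
have Hhas : has (fun X : {set 'I_n} => l \in X) Ss by rewrite has_find.
rewrite /hit -/j0 (take_nth set0 Hj0) map_rcons flatten_rcons.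
set L1 := flatten _.
set L2 := lst _.
have HlL1 : val l \notin L1 by rewrite /L1 mem_flat notin_take.
have HlL2 : val l \in L2 by rewrite /L2 mem_val_lst; exact: (nth_find set0 Hhas).
apply: c_core.
- by rewrite Hkl ltn_ord.
- rewrite -flatten_rcons -map_rcons -take_nth // mem_flat notin_take //.
- by rewrite mem_cat HlL2 orbT.
move=> P Q E i Hik.
have Hin : i < n by have := ltn_ord l; lia.
have [P2 [HP HL2]] := split_after HlL1 (esym E).
have Hhi := Hi (Ordinal Hin) Hik.
have Hjl : hit Ss l = j0.+1 by [].
rewrite Hjl in Hhi.
case: (leqP (hit Ss (Ordinal Hin)) j0) => Hc; last first.
  have Hm : val (Ordinal Hin) \in L2.
    have := @hit_nth n Ss (Ordinal Hin) ltac:(lia).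
    rewrite (_ : (hit Ss (Ordinal Hin)).-1 = j0); last lia.
    by rewrite /L2 mem_val_lst.
  move: Hm; rewrite HL2 HP mem_cat /= in_cons => /orP [HP2|/orP [/eqP Eil|HQ]].
  - by rewrite mem_cat HP2 orbT.
  - lia.
  have := lst_sorted (nth set0 Ss j0); rewrite -/L2 HL2 sorted_cat_cons.
  case/andP => _ /(order_path_min leq_trans) /allP /(_ _ HQ) => /= Hli; lia.
have Hm : val (Ordinal Hin) \in L1 by apply: mem_hit; lia.
by rewrite HP mem_cat Hm.
Qed.

End PartCconn.

Theorem proposition4p9 :
  (* (a) *)
  (forall (F : forest) (v : nat), v < fsize F ->
     exists k : nat, forall u : nat, desc F v u <-> v <= u < v + k)
  /\
  (* (b) ; 1-based labels [m, n] = 0-based labels >= m - 1 *)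
  (forall (R : realFieldType) (p : R) (n m : nat) (F G G' : forest),
     (0 < p <= 1)%R -> 1 <= m <= n -> fsize F = n ->
     G = restr m.-1 F -> fsize G' = n - m + 1 ->
     ungar_prob n p F (fun F' => restr m.-1 F' == G')
     = ungar_prob (n - m + 1) p G (fun G2 => G2 == G'))
  /\
  (* (c) *)
  (forall (n : nat) (Ss : seq {set 'I_n}) (k l : 'I_n),
     k < l -> hit Ss l <= size Ss -> hit Ss l < hit Ss k ->
     (forall i : 'I_n, k < i < l -> hit Ss i <= hit Ss l) ->
     is_child (run (take (hit Ss l) Ss) (hat1 n)) k l).
Proof. split; [exact: partA | split; [exact: partB | exact: partC]]. Qed.
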